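(* Let $A$ be a finite alphabet and $Y\subseteq A^+$ a set of nonempty words. Let $\mathcal{S}=(A,Y,R')$ be the flat splicing system with $R'=\{\langle a\mid1-1\mid b\rangle : a,b\in A\}$. Then $Y^{\leftarrow_*}\setminus\{1\}=L(\mathcal{S})$.
   Context: $1$ denotes the empty word, $A^+=A^*\setminus\{1\}$. Flat splicing system $\mathcal{S}=(A,Y,R')$: rules $\langle\alpha\mid\beta-\gamma\mid\delta\rangle$ with $\alpha,\beta,\gamma,\delta\in A^*$; applying it to $u=x\alpha\beta y$ and $v=\gamma z\delta$ yields $x\alpha\gamma z\delta\beta y$. In particular $\langle a\mid1-1\mid b\rangle$ applied to $u=xay$ and $v=zb$ yields $xazby$. $L(\mathcal{S})$ is the smallest language containing $Y$ and closed under applying rules of $R'$. Iterated insertion: for $Z,Y\subseteq A^*$, $Z\leftarrow Y=\{z_1yz_2: z_1z_2\in Z, y\in Y\}$; $Y^{\leftarrow_0}=\{1\}$, $Y^{\leftarrow_{i+1}}=Y^{\leftarrow_i}\leftarrow Y$, $Y^{\leftarrow_*}=\bigcup_{i\ge0}Y^{\leftarrow_i}$. *)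

(* Defs.v *)
From mathcomp Require Import all_boot.
Set Implicit Arguments. Unset Strict Implicit. Unset Printing Implicit Defensive.

(* Words over alphabet A are sequences [seq A]; the empty word 1 is [::].
   Languages are predicates on words. *)
Definition lang (A : Type) := seq A -> Prop.

Record fsrule (A : Type) := FSRule { r_alpha : seq A; r_beta : seq A;
                                     r_gamma : seq A; r_delta : seq A }.

Definition fs_apply (A : Type) (r : fsrule A) (u v w : seq A) : Prop :=
  exists x y z : seq A,
    u = x ++ r_alpha r ++ r_beta r ++ y /\
    v = r_gamma r ++ z ++ r_delta r /\
    w = x ++ r_alpha r ++ r_gamma r ++ z ++ r_delta r ++ r_beta r ++ y.

Inductive fs_lang (A : Type) (Y : lang A) (R : fsrule A -> Prop) : lang A :=
| fs_init : forall w, Y w -> fs_lang Y R w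
| fs_step : forall r u v w, R r -> fs_lang Y R u -> fs_lang Y R v ->
    fs_apply r u v w -> fs_lang Y R w.

Definition insertion (A : Type) (Z Y : lang A) : lang A :=
  fun w => exists z1 z2 y, Z (z1 ++ z2) /\ Y y /\ w = z1 ++ y ++ z2.

Fixpoint iter_ins (A : Type) (Y : lang A) (i : nat) : lang A :=
  match i with
  | 0 => fun w => w = [::]
  | i.+1 => insertion (iter_ins Y i) Y
  end.

Definition iter_ins_star (A : Type) (Y : lang A) : lang A :=
  fun w => exists i, iter_ins Y i w.

Definition Rprime (A : Type) : fsrule A -> Prop :=
  fun r => exists a b : A, r = FSRule [:: a] [::] [::] [:: b].

(* Main.v *)
Require Import Defs.
From mathcomp Require Import all_boot.

Lemma ins_closed (A : Type) (Y : lang A) j v : iter_ins Y j v ->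
  forall i x y, iter_ins Y i (x ++ y) -> iter_ins Y (i + j) (x ++ v ++ y).
Proof.
elim: j v => [|j IH] v /=.
  by move=> -> i x y; rewrite addn0.
move=> [z1 [z2 [y0 [Hz [Hy0 ->]]]]] i x y Hi.
have H := IH _ Hz _ _ _ Hi; rewrite addnS /=.
exists (x ++ z1), (z2 ++ y), y0; split; first by move: H; rewrite !catA.
by split=> //; rewrite -!catA.
Qed.

Theorem proposition11p8 (A : finType) (Y : seq A -> Prop)
  (HY : forall y, Y y -> y <> [::]) :
  forall w : seq A, (iter_ins_star Y w /\ w <> [::]) <-> fs_lang Y (@Rprime A) w.
Proof.
move=> w; split.
  move=> [[i Hi] Hw]; elim: i w Hi Hw => [|i IH] w /=; first by move=> ->.
  move=> [z1 [z2 [y [Hz [Hy ->]]]]] _.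
  case: (z1 ++ z2 =P [::]) => [E|NE].
    case: z1 Hz E => [|//] _; case: z2 => [|//] _.
    by rewrite /= cats0; apply: fs_init.
  have IHz := IH _ Hz NE.
  case: (lastP z1) NE IHz => [|x a] NE IHz.
    (* insert z2 at the end of y *)
    have Hyn := HY _ Hy; move: Hyn Hy; case: (lastP y) => [//|x a] _ Hy /=.
    case: (lastP z2) NE IHz => [//|z b] _ IHz.
    apply: (@fs_step _ _ _ (FSRule [:: a] [::] [::] [:: b]) (rcons x a) (rcons z b)).
    - by exists a, b.
    - exact: fs_init.
    - exact: IHz.
    by exists x, [::], z; rewrite /= -!cats1 -!catA.
  have Hyn := HY _ Hy; move: Hyn Hy; case: (lastP y) => [//|z b] _ Hy.
  apply: (@fs_step _ _ _ (FSRule [:: a] [::] [::] [:: b]) (rcons x a ++ z2) (rcons z b)).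
  - by exists a, b.
  - exact: IHz.
  - exact: fs_init.
  by exists x, z2, z; rewrite /= -!cats1 -!catA.
elim=> [v Hv|r u v w' [a [b ->]] _ [[i Hu] _] _ [[j Hv] Hvn] [x [y [z [Eu [Ev ->]]]]]].
  split; last exact: HY.
  exists 1; exists [::], [::], v; split=> //=; by rewrite cats0.
split; last by case: (x).
exists (i + j); move: Eu Ev => /= Eu Ev.
have := @ins_closed _ Y j v Hv i (x ++ [:: a]) y.
rewrite -catA /= -Eu => H; have := H Hu.
by rewrite Ev -!catA.
Qed.
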